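(* Identify $S^1$ with $[0,1]/(0\sim1)$. Let $f:S^1\multimap S^1$ be given by $f(x)=\{0,\tfrac12\}$ for $x\notin[\tfrac13,\tfrac23]$ and $f(x)=\{0,\tfrac12,\tfrac{3x-1}{2}\}$ for $x\in[\tfrac13,\tfrac23]$. Then $f$ is a (lower and upper semicontinuous) at-most-3-valued map, but there is no function $w:S^1\times S^1\to\mathbb{N}$ such that $(f,w)$ is an $\mathbb{N}$-weighted map.
   Context: A weighted map from $X$ to $Y$ is a pair $\psi=(n_\psi,w_\psi)$ where (1) $n_\psi:X\multimap Y$ is an upper semicontinuous multivalued map with $n_\psi(x)$ a finite subset of $Y$ for all $x$; (2) $w_\psi:X\times Y\to\mathbb{N}$ is a function such that (i) $w_\psi(x,y)=0$ whenever $y\notin n_\psi(x)$, and (ii) for every open $U\subseteq Y$ and $x\in X$ with $n_\psi(x)\cap\partial U=\emptyset$ there is an open neighborhood $V$ of $x$ with $\sum_{y\in U}w_\psi(x,y)=\sum_{y\in U}w_\psi(z,y)$ for all $z\in V$. It is an $\mathbb{N}$-weighted map if moreover $w_\psi(x,y)>0$ for all $x\in X$ and $y\in n_\psi(x)$. An at-most-$n$-valued map is a lower and upper semicontinuous multivalued map whose values are nonempty sets of cardinality at most $n$. *)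

(* Defs.v *)
From HB Require Import structures.
From mathcomp Require Import all_boot all_order all_algebra.
From mathcomp Require Import all_classical all_reals all_analysis.
From mathcomp Require Import generic_quotient.
Set Implicit Arguments. Unset Strict Implicit. Unset Printing Implicit Defensive.
Import Order.TTheory GRing.Theory Num.Theory.
Import numFieldNormedType.Exports.
Local Open Scope classical_set_scope.
Local Open Scope ring_scope.

Definition usc_mmap {X Y : topologicalType} (F : X -> set Y) : Prop :=
  forall (x : X) (U : set Y), open U -> F x `<=` U ->
    exists V : set X, [/\ open V, V x & forall z, V z -> F z `<=` U].

Definition lsc_mmap {X Y : topologicalType} (F : X -> set Y) : Prop :=
  forall (x : X) (U : set Y), open U -> F x `&` U !=set0 ->
    exists V : set X, [/\ open V, V x & forall z, V z -> F z `&` U !=set0].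

Definition at_most_n_valued {X Y : topologicalType} (n : nat) (F : X -> set Y) : Prop :=
  [/\ lsc_mmap F, usc_mmap F &
      forall x, F x !=set0 /\
        exists s : seq Y, (size s <= n)%N /\ F x = [set y | y \in s]].

Definition boundary {Y : topologicalType} (U : set Y) : set Y :=
  closure U `\` interior U.

Definition weighted_map {X Y : topologicalType} (n : X -> set Y) (w : X -> Y -> nat) : Prop :=
  [/\ usc_mmap n,
      (forall x, finite_set (n x)),
      (forall x y, ~ n x y -> w x y = 0%N) &
      (forall (U : set Y) (x : X), open U -> n x `&` boundary U = set0 ->
         exists V : set X, [/\ open V, V x &
           forall z, V z -> \sum_(y \in U) w x y = \sum_(y \in U) w z y])].

Definition N_weighted_map {X Y : topologicalType} (n : X -> set Y) (w : X -> Y -> nat) : Prop :=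
  weighted_map n w /\ (forall x y, n x y -> (0 < w x y)%N).

Section Circle.
Variable R : realType.

Definition I01 : Type := set_type (`[0, 1]%classic : set R).
HB.instance Definition _ := Topological.copy I01 (set_type (`[0, 1]%classic : set R)).

Definition endpt (x : I01) : bool := (sval x == 0) || (sval x == 1).

Definition circ_rel (x y : I01) : bool := (x == y) || (endpt x && endpt y).

Lemma circ_rel_refl : reflexive circ_rel.
Proof. by move=> x; rewrite /circ_rel eqxx. Qed.

Lemma circ_rel_sym : symmetric circ_rel.
Proof. by move=> x y; rewrite /circ_rel eq_sym andbC. Qed.

Lemma circ_rel_trans : transitive circ_rel.
Proof.
move=> y x z; rewrite /circ_rel.
case/orP=> [/eqP -> //|/andP [ex ey]].
case/orP=> [/eqP <-|/andP [_ ez]]; first by rewrite ex ey orbT.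
by rewrite ex ez orbT.
Qed.

Definition circ_equiv := EquivRel circ_rel circ_rel_refl circ_rel_sym circ_rel_trans.

Definition S1 : Type := quotient_topology {eq_quot circ_equiv}%qT.
HB.instance Definition _ := Topological.copy S1 (quotient_topology {eq_quot circ_equiv}%qT).

Definition piS1 (t : I01) : S1 := (\pi_(quotient_topology {eq_quot circ_equiv}%qT))%qT t.

End Circle.

Definition circle_f (R : realType) (x : S1 R) : set (S1 R) :=
  [set y | (exists u : I01 R, sval u = 0 /\ y = piS1 u)
        \/ (exists u : I01 R, sval u = 2^-1 /\ y = piS1 u)
        \/ (exists s u : I01 R, [/\ 3^-1 <= sval s <= 2 / 3, x = piS1 s,
                                   sval u = (3 * sval s - 1) / 2 & y = piS1 u])].

(* Main.v *)
Require Import Defs.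
From HB Require Import structures.
From mathcomp Require Import all_boot all_order all_algebra.
From mathcomp Require Import all_classical all_reals all_analysis.
From mathcomp Require Import generic_quotient.
From mathcomp Require Import ring lra zify.
Set Implicit Arguments. Unset Strict Implicit. Unset Printing Implicit Defensive.
Import Order.TTheory GRing.Theory Num.Theory.
Import numFieldNormedType.Exports.
Local Open Scope classical_set_scope.
Local Open Scope ring_scope.

Section Basics.
Variable R : realType.
Implicit Types (s t u : I01 R) (x y z : S1 R).

Definition clamp (r : R) : R := Num.max 0 (Num.min r 1).

Lemma clamp_in (r : R) : clamp r \in (`[0, 1]%classic : set R).
Proof.
apply/mem_set; rewrite /= in_itv /= /clamp; apply/andP; split.
  by rewrite le_max lexx.
by rewrite ge_max ler01 ge_min lexx orbT.
Qed.

Definition mkI (r : R) : I01 R := exist _ (clamp r) (clamp_in r).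

Lemma svalI s : 0 <= sval s <= 1.
Proof. by case: s => /= r /set_mem; rewrite /= in_itv. Qed.

Lemma mkIK (r : R) : 0 <= r <= 1 -> sval (mkI r) = r.
Proof.
move=> /andP[h0 h1]; rewrite /= /clamp.
have -> : Num.min r 1 = r by apply/min_idPl.
by apply/max_idPr.
Qed.

Lemma I01_eq s t : sval s = sval t -> s = t.
Proof. by move=> h; apply: eq_sig_hprop. Qed.

Lemma mkI_sval s : mkI (sval s) = s.
Proof. by apply: I01_eq; rewrite mkIK // svalI. Qed.

Lemma piS1_eq s t : piS1 s = piS1 t ->
  s = t \/ ((sval s = 0 \/ sval s = 1) /\ (sval t = 0 \/ sval t = 1)).
Proof.
rewrite /piS1 => h.
have : circ_rel s t.
  by apply/(@eqquotP _ (circ_equiv R) (quotient_topology {eq_quot (circ_equiv R)}%qT)); exact: h.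
rewrite /circ_rel /endpt => /orP[/eqP -> | /andP[/orP[] /eqP a /orP[] /eqP b]].
- by left.
- by right; split; [left|left].
- by right; split; [left|right].
- by right; split; [right|left].
- by right; split; [right|right].
Qed.

Lemma piS1_surj x : exists s, x = piS1 s.
Proof. by exists (repr x); rewrite /piS1 reprK. Qed.

Lemma piS1_01 : piS1 (mkI 0) = piS1 (mkI 1).
Proof.
rewrite /piS1; apply/(@eqquotP _ (circ_equiv R) _).
by rewrite /= /circ_rel /endpt !mkIK ?lexx ?ler01 // eqxx oner_eq0 /= eqxx orbT.
Qed.


Lemma I01_openP (A : set (I01 R)) : open A -> forall s, A s ->
  exists2 d : R, 0 < d & forall u, `|sval u - sval s| < d -> A u.
Proof.
move=> [B oB <-] s /= Bs.
have : nbhs (sval s) B by apply: open_nbhs_nbhs.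
move=> /nbhs_ballP [e e0 he]; exists e => // u hu; apply: he.
by rewrite /ball /= distrC.
Qed.

Lemma I01_open (A : set (I01 R)) :
  (forall s, A s -> exists2 d : R, 0 < d & forall u, `|sval u - sval s| < d -> A u) ->
  open A.
Proof.
move=> hA.
exists [set r | exists s d, [/\ A s, 0 < d, (forall u, `|sval u - sval s| < d -> A u) & `|r - sval s| < d]].
  rewrite openE => r [s [d [As d0 hd hr]]].
  apply/nbhs_ballP; exists (d - `|r - sval s|); first by rewrite /= subr_gt0.
  move=> y /=; rewrite /ball /= => hy; exists s, d; split => //.
  have := ler_distD r (sval s) y.
  rewrite distrC => h1.
  apply: (le_lt_trans h1). rewrite distrC. rewrite -ltrBrDl. done.
apply/seteqP; split => u /=.
  by move=> [s [d [As d0 hd hr]]]; apply: hd.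
move=> Au; have [d d0 hd] := hA u Au; exists u, d; split => //.
by rewrite subrr normr0.
Qed.

Definition PS (Q : set R) : set (S1 R) := [set z | exists s, z = piS1 s /\ Q (sval s)].

Lemma PS_pi (Q : set R) : (Q 0 <-> Q 1) -> forall s, PS Q (piS1 s) <-> Q (sval s).
Proof.
move=> hQ s; split; last by move=> h; exists s.
move=> [t [/piS1_eq [-> //| [[h1|h1] [h2|h2]]] Qt]]; rewrite h1.
- by rewrite -h2.
- by apply/hQ; rewrite -h2.
- by apply/hQ; rewrite -h2.
- by rewrite -h2.
Qed.

Lemma PS_open (Q : set R) : open Q -> (Q 0 <-> Q 1) -> open (PS Q).
Proof.
move=> oQ hQ; change (open (@piS1 R @^-1` PS Q)).
exists Q => //; apply/seteqP; split => s /=; by move/(@PS_pi Q hQ s).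
Qed.

Lemma S1_openP (V : set (S1 R)) : open V -> forall s, V (piS1 s) ->
  exists2 d : R, 0 < d & forall u, `|sval u - sval s| < d -> V (piS1 u).
Proof. move=> oV s Vs; exact: (@I01_openP (@piS1 R @^-1` V) oV s Vs). Qed.

Lemma S1_open (V : set (S1 R)) :
  (forall s, V (piS1 s) -> exists2 d : R, 0 < d & forall u, `|sval u - sval s| < d -> V (piS1 u)) ->
  open V.
Proof. move=> h; change (open (@piS1 R @^-1` V)); exact: I01_open. Qed.

End Basics.
Section LC.
Variable R : realType.

Lemma nat_half (n m : nat) : (n%:R : R) <> m%:R + 2^-1.
Proof.
move=> h.
have : ((2 * n)%:R : R) = (2 * m + 1)%:R.
  rewrite natrM natrD natrM h mulrDr; congr (_ + _).
  by rewrite mulfV // pnatr_eq0.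
move/eqP; rewrite eqr_nat => /eqP; lia.
Qed.

Lemma LC (g : R -> nat) (a b : R) : a <= b ->
 (forall t, a <= t <= b -> exists2 d : R, 0 < d &
     forall u, a <= u <= b -> `|u - t| < d -> g u = g t) -> g a = g b.
Proof.
move=> ab hg.
have cont : {within `[a,b], continuous (fun t => (g t)%:R : R)}.
  rewrite continuous_subspace_in => x xab.
  apply: cvg_near_cst.
  rewrite /prop_near1 /nbhs /=.
  rewrite -nbhs_subspace_in; last by move: xab; rewrite inE.
  have xab' : a <= x <= b by move: xab; rewrite inE /= in_itv.
  have [d d0 hd] := hg x xab'.
  rewrite /within /=; apply/nbhs_ballP; exists d => //= y.
  rewrite /ball /= => hy; rewrite /= in_itv /= => yab.
  by rewrite /from_subspace /= (hd y yab) // distrC.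
have ha : a \in `[a, b] by rewrite in_itv /= lexx ab.
have hb : b \in `[a, b] by rewrite in_itv /= lexx ab.
case: (ltngtP (g a) (g b)) => // hab.
- have := @IVT R (fun t => (g t)%:R) a b ((g a)%:R + 2^-1) ab cont.
  case.
    have -> : Num.min ((g a)%:R : R) (g b)%:R = (g a)%:R by apply/min_idPl; rewrite ler_nat ltnW.
    have -> : Num.max ((g a)%:R : R) (g b)%:R = (g b)%:R by apply/max_idPr; rewrite ler_nat ltnW.
    have : ((g a).+1%:R : R) <= (g b)%:R by rewrite ler_nat.
    rewrite -addn1 natrD => h; apply/andP; split.
      by rewrite lerDl invr_ge0 ler0n.
    apply: le_trans h; rewrite lerD2l; lra.
  by move=> c _ /nat_half.
- have := @IVT R (fun t => (g t)%:R) a b ((g b)%:R + 2^-1) ab cont.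
  case.
    have -> : Num.min ((g a)%:R : R) (g b)%:R = (g b)%:R by apply/min_idPr; rewrite ler_nat ltnW.
    have -> : Num.max ((g a)%:R : R) (g b)%:R = (g a)%:R by apply/max_idPl; rewrite ler_nat ltnW.
    have : ((g b).+1%:R : R) <= (g a)%:R by rewrite ler_nat.
    rewrite -addn1 natrD => h; apply/andP; split.
      by rewrite lerDl invr_ge0 ler0n.
    apply: le_trans h; rewrite lerD2l; lra.
  by move=> c _ /nat_half.
Qed.

End LC.
Lemma sum_seq (T : choiceType) (U : set T) (f : T -> nat) (r : seq T) :
  uniq r -> (forall y, y \notin r -> f y = 0%N) ->
  \sum_(y \in U) f y = \sum_(y <- r | `[< U y >]) f y.
Proof.
move=> ur hf.
rewrite -(fsbig_widen (U `&` [set` r]) U f).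
- rewrite (fsbig_fwiden [seq y <- r | `[< U y >]] (U `&` [set` r]) f).
  + by rewrite big_filter.
  + by move=> y [Uy /= yr]; rewrite mem_filter yr andbT; apply/asboolP.
  + exact: filter_uniq.
  + move=> y [/=]; rewrite mem_filter => /andP[/asboolP Uy yr] H.
    by exfalso; apply: H; split.
- by move=> y [].
- move=> y [Uy /not_andP [//|/= ynr]].
  by rewrite /= hf //; apply/negP.
Qed.

Section Circ.
Variable R : realType.

Definition pt (r : R) : S1 R := piS1 (mkI r).

Lemma pt_sval (s : I01 R) : pt (sval s) = piS1 s.
Proof. by rewrite /pt mkI_sval. Qed.

Lemma pt_inj (r r' : R) : 0 < r < 1 -> 0 <= r' <= 1 -> pt r = pt r' -> r = r'.
Proof.
move=> hr hr' /piS1_eq [h|[[h|h] _]].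
- have hr2 : 0 <= r <= 1 by apply/andP; split; case/andP: hr => *; apply: ltW.
  by have := congr1 sval h; rewrite !mkIK.
- have hr2 : 0 <= r <= 1 by apply/andP; split; case/andP: hr => *; apply: ltW.
  by move: h; rewrite mkIK //; move: hr => /andP[] *; lra.
- have hr2 : 0 <= r <= 1 by apply/andP; split; case/andP: hr => *; apply: ltW.
  by move: h; rewrite mkIK //; move: hr => /andP[] *; lra.
Qed.


Definition ccv (r : R) : R := Num.max 0 (Num.min ((3 * r - 1) / 2) 2^-1).

Lemma ccv_mid r : 3^-1 <= r <= 2/3 -> ccv r = (3 * r - 1) / 2.
Proof.
move=> /andP[h1 h2]; rewrite /ccv.
rewrite (_ : Num.min _ _ = (3 * r - 1) / 2); last by apply/min_idPl; lra.
by apply/max_idPr; lra.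
Qed.

Lemma ccv_lo r : r <= 3^-1 -> ccv r = 0.
Proof.
move=> h1; rewrite /ccv.
rewrite (_ : Num.min _ _ = (3 * r - 1) / 2); last by apply/min_idPl; lra.
by apply/max_idPl; lra.
Qed.

Lemma ccv_hi r : 2/3 <= r -> ccv r = 2^-1.
Proof.
move=> h1; rewrite /ccv.
rewrite (_ : Num.min _ _ = 2^-1); last by apply/min_idPr; lra.
by apply/max_idPr; lra.
Qed.

Lemma ccv_cases r : [\/ r <= 3^-1 /\ ccv r = 0,
   3^-1 <= r <= 2/3 /\ ccv r = (3 * r - 1) / 2 | 2/3 <= r /\ ccv r = 2^-1].
Proof.
case: (lerP r 3^-1) => h1; first by apply: Or31; split => //; exact: ccv_lo.
case: (lerP r (2/3)) => h2.
  by apply: Or32; split; [apply/andP; split => //; exact: ltW | apply: ccv_mid; apply/andP; split => //; exact: ltW].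
by apply: Or33; split; [exact: ltW | apply: ccv_hi; exact: ltW].
Qed.

Lemma ccv_bd r : 0 <= ccv r <= 2^-1.
Proof. by case: (ccv_cases r) => [[h ->]|[/andP[h1 h2] ->]|[h ->]]; apply/andP; split; lra. Qed.

Lemma ccv_lip r r' : `|ccv r - ccv r'| <= 3/2 * `|r - r'|.
Proof.
have e1 := ler_norm (r - r').
have e2 : r' - r <= `|r - r'| by rewrite distrC; exact: ler_norm.
rewrite ler_norml; apply/andP.
by case: (ccv_cases r) => [[h ->]|[/andP[h1 h2] ->]|[h ->]];
   case: (ccv_cases r') => [[h' ->]|[/andP[h1' h2'] ->]|[h' ->]]; split; lra.
Qed.

Lemma f_spec (s : I01 R) y : circle_f (piS1 s) y <->
  [\/ y = pt 0, y = pt 2^-1 | y = pt (ccv (sval s))].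
Proof.
split.
  case=> [[u [u0 ->]] | [[u [u0 ->]] | [s' [u [/andP[h1 h2] e hu ->]]]]].
  - by apply: Or31; rewrite -pt_sval u0.
  - by apply: Or32; rewrite -pt_sval u0.
  - apply: Or33; rewrite -pt_sval hu.
    case: (piS1_eq e) => [->|[_ [h|h]]]; last 2 first.
    + by exfalso; move: h1 h2; rewrite h; lra.
    + by exfalso; move: h1 h2; rewrite h; lra.
    by rewrite ccv_mid //; apply/andP.
case=> ->.
- by left; exists (mkI 0); split => //; rewrite mkIK // lexx ler01.
- right; left; exists (mkI 2^-1); split => //; rewrite mkIK //; apply/andP; split; lra.
- case: (ccv_cases (sval s)) => [[h ->]|[h ->]|[h ->]].
  + by left; exists (mkI 0); split => //; rewrite mkIK // lexx ler01.
  + right; right; exists s, (mkI ((3 * sval s - 1) / 2)); split => //.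
    rewrite mkIK //; case/andP: h => *; apply/andP; split; lra.
  + right; left; exists (mkI 2^-1); split => //; rewrite mkIK //; apply/andP; split; lra.
Qed.


Lemma f_spec_pt (t : R) y : 0 <= t <= 1 -> circle_f (pt t) y <->
  [\/ y = pt 0, y = pt 2^-1 | y = pt (ccv t)].
Proof. by move=> ht; rewrite /pt f_spec mkIK. Qed.

Lemma pt_ccv_close (U : set (S1 R)) (t : I01 R) : open U -> U (pt (ccv (sval t))) ->
  exists2 d : R, 0 < d & forall u : I01 R, `|sval u - sval t| < d -> U (pt (ccv (sval u))).
Proof.
move=> oU hC.
have [d d0 hd] := S1_openP oU hC.
exists (d / 2); first by lra.
move=> u hu; apply: (hd (mkI (ccv (sval u)))).
have bd := ccv_bd.
rewrite !mkIK; last 2 first.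
  by case/andP: (bd (sval t)) => *; apply/andP; split; lra.
  by case/andP: (bd (sval u)) => *; apply/andP; split; lra.
apply: (le_lt_trans (ccv_lip _ _)).
have h0 := normr_ge0 (sval u - sval t); lra.
Qed.

Lemma part1 : at_most_n_valued 3 (@circle_f R).
Proof.
split.
- move=> x U oU [y [fy Uy]]; have [s xs] := piS1_surj x; subst x.
  exists [set z | circle_f z `&` U !=set0]; split; [|by exists y|by move=> z].
  apply: S1_open => t [y' [/f_spec [->|->|->] Uy']].
  + exists 1 => // u _; exists (pt 0); split => //; apply/f_spec; exact: Or31.
  + exists 1 => // u _; exists (pt 2^-1); split => //; apply/f_spec; exact: Or32.
  + have [d d0 hd] := pt_ccv_close oU Uy'.
    exists d => // u hu; exists (pt (ccv (sval u))); split; last exact: hd.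
    apply/f_spec; exact: Or33.
- move=> x U oU sub; have [s xs] := piS1_surj x; subst x.
  exists [set z | circle_f z `<=` U]; split; [|by []|by move=> z].
  apply: S1_open => t ht.
  have hO : U (pt 0) by apply: ht; apply/f_spec; exact: Or31.
  have hH : U (pt 2^-1) by apply: ht; apply/f_spec; exact: Or32.
  have hC : U (pt (ccv (sval t))) by apply: ht; apply/f_spec; exact: Or33.
  have [d d0 hd] := pt_ccv_close oU hC.
  exists d => // u hu y /f_spec [->|->|->] //; exact: hd.
- move=> x; have [s xs] := piS1_surj x; subst x; split.
    by exists (pt 0); apply/f_spec; exact: Or31.
  exists [:: pt 0; pt 2^-1; pt (ccv (sval s))]; split => //.
  apply/seteqP; split => y /=.
    by move/f_spec => [->|->|->]; rewrite !inE eqxx ?orbT.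
  rewrite !inE => /or3P [/eqP->|/eqP->|/eqP->]; apply/f_spec;
    [exact: Or31|exact: Or32|exact: Or33].
Qed.


Lemma PS_pt (Q : set R) r : (Q 0 <-> Q 1) -> 0 <= r <= 1 -> PS Q (pt r) <-> Q r.
Proof. by move=> hQ hr; rewrite /pt (PS_pi hQ) mkIK. Qed.

Lemma not_bnd_out (Q1 Q2 : set R) r : 0 <= r <= 1 -> open Q2 ->
  (Q1 0 <-> Q1 1) -> (Q2 0 <-> Q2 1) -> Q2 r ->
  (forall r, Q1 r -> Q2 r -> False) -> ~ boundary (PS Q1) (pt r).
Proof.
move=> hr oQ2 s1 s2 q2 dis [cl _].
have [z [[s [-> q1]] z2]] := cl (PS Q2) (open_nbhs_nbhs (conj (PS_open oQ2 s2) ((PS_pt s2 hr).2 q2))).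
by move/(PS_pi s2): z2; apply: dis.
Qed.

Lemma not_bnd_in (Q1 : set R) r : 0 <= r <= 1 -> open Q1 ->
  (Q1 0 <-> Q1 1) -> Q1 r -> ~ boundary (PS Q1) (pt r).
Proof.
move=> hr oQ s1 q1 [_ ni]; apply: ni.
rewrite (proj1 (interior_id _) (PS_open oQ s1)).
exact/(PS_pt s1 hr).
Qed.

Lemma loc_const (w : S1 R -> S1 R -> nat) (U : set (S1 R)) (a b : R) :
  (forall (U : set (S1 R)) (x : S1 R), open U -> circle_f x `&` boundary U = set0 ->
         exists V : set (S1 R), [/\ open V, V x &
           forall z, V z -> \sum_(y \in U) w x y = \sum_(y \in U) w z y]) ->
  open U -> 0 <= a -> b <= 1 ->
  (forall t, a <= t <= b -> circle_f (pt t) `&` boundary U = set0) ->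
  forall t, a <= t <= b -> exists2 d : R, 0 < d &
     forall u, a <= u <= b -> `|u - t| < d ->
       \sum_(y \in U) w (pt u) y = \sum_(y \in U) w (pt t) y.
Proof.
move=> wloc oU a0 b1 hb t ht.
have [V [oV Vt hV]] := wloc U (pt t) oU (hb t ht).
have [d d0 hd] := S1_openP oV Vt.
exists d => // u hu hut; symmetry; apply: hV.
have tI : 0 <= t <= 1 by case/andP: ht => *; apply/andP; split; lra.
have uI : 0 <= u <= 1 by case/andP: hu => *; apply/andP; split; lra.
by have := hd (mkI u); rewrite !mkIK //; apply.
Qed.


Lemma part2 : ~ (exists w : S1 R -> S1 R -> nat, N_weighted_map (@circle_f R) w).
Proof.
move=> [w [[_ _ w0 wloc] wpos]].
pose Q0 := [set r : R | r < 10^-1 \/ 9/10 < r].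
pose QH := [set r : R | 2/5 < r /\ r < 3/5].
pose Y0 := [set r : R | 1/5 < r /\ r < 3/5].
pose YH := [set r : R | r < 3/10 \/ 7/10 < r].
have oQ0 : open Q0.
  suff -> : Q0 = [set x | x < 10^-1] `|` [set x | x > 9/10] by apply: openU; [apply: open_lt|apply: open_gt].
  by [].
have oQH : open QH.
  suff -> : QH = [set x | x > 2/5] `&` [set x | x < 3/5] by apply: openI; [apply: open_gt|apply: open_lt].
  by [].
have oY0 : open Y0.
  suff -> : Y0 = [set x | x > 1/5] `&` [set x | x < 3/5] by apply: openI; [apply: open_gt|apply: open_lt].
  by [].
have oYH : open YH.
  suff -> : YH = [set x | x < 3/10] `|` [set x | x > 7/10] by apply: openU; [apply: open_lt|apply: open_gt].
  by [].
have sQ0 : Q0 0 <-> Q0 1 by split => _; [right|left]; lra.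
have sYH : YH 0 <-> YH 1 by split => _; [right|left]; lra.
have sQH : QH 0 <-> QH 1 by split => -[]; lra.
have sY0 : Y0 0 <-> Y0 1 by split => -[]; lra.
have I0 : 0 <= (0 : R) <= 1 by apply/andP; split; lra.
have Ih : 0 <= (2^-1 : R) <= 1 by apply/andP; split; lra.
have Iq : 0 <= (4^-1 : R) <= 1 by apply/andP; split; lra.
have bA : forall t, 2^-1 <= t <= 1 -> circle_f (pt t) `&` boundary (PS Q0) = set0.
  move=> t ht; have tI : 0 <= t <= 1 by case/andP: ht => *; apply/andP; split; lra.
  apply/seteqP; split => [y [hy bd]|y //].
  case/(f_spec_pt _ tI): hy => hy; subst y.
  - by apply: (not_bnd_in I0 oQ0 sQ0 _ bd); left; lra.
  - apply: (not_bnd_out Ih oY0 sQ0 sY0 _ _ bd); first by split; lra.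
    by move=> r [] ? [] ?; lra.
  - have cI := ccv_bd t.
    have cI' : 0 <= ccv t <= 1 by case/andP: cI => *; apply/andP; split; lra.
    apply: (not_bnd_out cI' oY0 sQ0 sY0 _ _ bd); last by move=> r [] ? [] ?; lra.
    case/andP: ht => ht1 ht2.
    by case: (ccv_cases t) => [[h ->]|[/andP[h1 h2] ->]|[h ->]]; split; lra.
have bB : forall t, 0 <= t <= 2^-1 -> circle_f (pt t) `&` boundary (PS QH) = set0.
  move=> t ht; have tI : 0 <= t <= 1 by case/andP: ht => *; apply/andP; split; lra.
  apply/seteqP; split => [y [hy bd]|y //].
  case/(f_spec_pt _ tI): hy => hy; subst y.
  - apply: (not_bnd_out I0 oYH sQH sYH _ _ bd); first by left; lra.
    by move=> r [] ? ? []; lra.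
  - by apply: (not_bnd_in Ih oQH sQH _ bd); split; lra.
  - have cI := ccv_bd t.
    have cI' : 0 <= ccv t <= 1 by case/andP: cI => *; apply/andP; split; lra.
    apply: (not_bnd_out cI' oYH sQH sYH _ _ bd); last by move=> r [] ? ? []; lra.
    case/andP: ht => ht1 ht2; left.
    by case: (ccv_cases t) => [[h ->]|[/andP[h1 h2] ->]|[h ->]]; lra.
have bT : forall t, 0 <= t <= 2^-1 -> circle_f (pt t) `&` boundary setT = set0.
  move=> t ht; apply/seteqP; split => [y [hy [_ ni]]|y //].
  by apply: ni; rewrite (proj1 (interior_id _) openT).
pose gA t := \sum_(y \in PS Q0) w (pt t) y.
pose gB t := \sum_(y \in PS QH) w (pt t) y.
pose gT t := \sum_(y \in [set: S1 R]) w (pt t) y.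
have hA : gA 2^-1 = gA 1.
  apply: (@LC R gA); first by lra.
  by rewrite /gA; apply: (loc_const wloc (PS_open oQ0 sQ0)) => //; lra.
have hA1 : gA 1 = gA 0 by rewrite /gA /pt -piS1_01.
have hB : gB 0 = gB 2^-1.
  apply: (@LC R gB); first by lra.
  by rewrite /gB; apply: (loc_const wloc (PS_open oQH sQH)) => //; lra.
have hT : gT 0 = gT 2^-1.
  apply: (@LC R gT); first by lra.
  by rewrite /gT; apply: (loc_const wloc openT) => //; lra.
have Jh : 0 < (2^-1 : R) < 1 by apply/andP; split; lra.
have Jq : 0 < (4^-1 : R) < 1 by apply/andP; split; lra.
have n01 : pt 0 <> pt 2^-1 by move=> e; have := pt_inj Jh I0 (esym e); lra.
have n02 : pt 0 <> pt 4^-1 by move=> e; have := pt_inj Jq I0 (esym e); lra.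
have n12 : pt 2^-1 <> pt 4^-1 by move=> e; have := pt_inj Jq Ih (esym e); lra.
have ccv0 : ccv 0 = 0 by apply: ccv_lo; lra.
have ccvh : ccv 2^-1 = 4^-1 by rewrite ccv_mid; [lra|apply/andP; split; lra].
have u0 : uniq [:: pt 0; pt 2^-1] by rewrite /= inE andbT; apply/eqP; exact: n01.
have u1 : uniq [:: pt 0; pt 2^-1; pt 4^-1].
  rewrite /= !inE !negb_or !andbT; repeat (apply/andP; split); apply/eqP;
    [exact n01|exact n02|exact n12].
have hf0 : forall y, y \notin [:: pt 0; pt 2^-1] -> w (pt 0) y = 0%N.
  move=> y; rewrite !inE negb_or => /andP[/eqP a /eqP b]; apply: w0.
  by move=> /(f_spec_pt _ I0); rewrite ccv0; case=> [/a|/b|/a].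
have hf1 : forall y, y \notin [:: pt 0; pt 2^-1; pt 4^-1] -> w (pt 2^-1) y = 0%N.
  move=> y; rewrite !inE !negb_or => /and3P[/eqP a /eqP b /eqP c]; apply: w0.
  by move=> /(f_spec_pt _ Ih); rewrite ccvh; case=> [/a|/b|/c].

have m00 : PS Q0 (pt 0) by apply/(PS_pt sQ0 I0); left; lra.
have m0h : ~ PS Q0 (pt 2^-1) by move/(PS_pt sQ0 Ih) => []; lra.
have m0q : ~ PS Q0 (pt 4^-1) by move/(PS_pt sQ0 Iq) => []; lra.
have mH0 : ~ PS QH (pt 0) by move/(PS_pt sQH I0) => []; lra.
have mHh : PS QH (pt 2^-1) by apply/(PS_pt sQH Ih); split; lra.
have mHq : ~ PS QH (pt 4^-1) by move/(PS_pt sQH Iq) => []; lra.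
have eA0 : gA 0 = w (pt 0) (pt 0).
  by rewrite /gA (sum_seq _ u0 hf0) !big_cons big_nil (asboolT m00) (asboolF m0h); exact: addr0.
have eB0 : gB 0 = w (pt 0) (pt 2^-1).
  by rewrite /gB (sum_seq _ u0 hf0) !big_cons big_nil (asboolF mH0) (asboolT mHh); exact: addr0.
have eT0 : gT 0 = (w (pt 0) (pt 0) + w (pt 0) (pt 2^-1))%N.
  by rewrite /gT (sum_seq _ u0 hf0) !big_cons big_nil !asboolT // addr0.
have eAh : gA 2^-1 = w (pt 2^-1) (pt 0).
  by rewrite /gA (sum_seq _ u1 hf1) !big_cons big_nil (asboolT m00) (asboolF m0h) (asboolF m0q); exact: addr0.
have eBh : gB 2^-1 = w (pt 2^-1) (pt 2^-1).
  by rewrite /gB (sum_seq _ u1 hf1) !big_cons big_nil (asboolF mH0) (asboolT mHh) (asboolF mHq); exact: addr0.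
have eTh : gT 2^-1 = (w (pt 2^-1) (pt 0) + (w (pt 2^-1) (pt 2^-1) + w (pt 2^-1) (pt 4^-1)))%N.
  by rewrite /gT (sum_seq _ u1 hf1) !big_cons big_nil !asboolT // addr0.
have wq : (0 < w (pt 2^-1) (pt 4^-1))%N.
  by apply: wpos; apply/(f_spec_pt _ Ih); rewrite ccvh; apply: Or33.
have e1 : w (pt 2^-1) (pt 0) = w (pt 0) (pt 0) by rewrite -eAh hA hA1 eA0.
have e3 : w (pt 0) (pt 2^-1) = w (pt 2^-1) (pt 2^-1) by rewrite -eB0 hB eBh.
have e4 : (w (pt 0) (pt 0) + w (pt 0) (pt 2^-1) =
  w (pt 2^-1) (pt 0) + (w (pt 2^-1) (pt 2^-1) + w (pt 2^-1) (pt 4^-1)))%N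
  by rewrite -eT0 hT eTh.
move: wq e1 e3 e4.
generalize (w (pt 0) (pt 0)) (w (pt 0) (pt 2^-1)) (w (pt 2^-1) (pt 0))
  (w (pt 2^-1) (pt 2^-1)) (w (pt 2^-1) (pt 4^-1)).
clear; move=> a b c d e; lia.
Qed.

End Circ.

Theorem mainTheorem13 (R : realType) :
  at_most_n_valued 3 (@circle_f R) /\
  ~ (exists w : S1 R -> S1 R -> nat, N_weighted_map (@circle_f R) w).
Proof. split; [exact: part1 | exact: part2]. Qed.
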